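(* For $u\ge0$ define $$\underline{\hat\kappa}^{VG}_{\tilde A}(u)=-\tilde A\tilde mu+\frac{e}{\eta}\Big[-\frac{e^{\tilde Au}\tilde Au}{C+D+2}\Big(\frac{1}{\tilde Au}\wedge1\Big)^{C+D+2}+\frac{e^{\tilde Au}}{C+D+1}\Big(\frac{1}{\tilde Au}\wedge1\Big)^{C+D+1}+\frac{\tilde Au}{C+D+2}-\frac{1+\tilde Au}{C+D+1}\Big],$$ which for $u\ge1/\tilde A$ equals $$-\tilde A\tilde mu+\frac{e}{\eta}\Big[\Big(\frac{1}{\tilde Au}\Big)^{C+D+1}e^{\tilde Au}\Big(\frac{1}{C+D+1}-\frac{1}{C+D+2}\Big)+\frac{\tilde Au}{C+D+2}-\frac{1+\tilde Au}{C+D+1}\Big].$$ Then $\hat\kappa^{VG}_{\tilde A}(u)\ge\underline{\hat\kappa}^{VG}_{\tilde A}(u)$ for all $u\ge0$.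
   Context: Variance-gamma setup: constants $\theta\in\mathbb R$, $\rho>0$, $\eta>0$; $C=\theta/\rho^2$, $D=\sqrt{\theta^2+2\rho^2/\eta}/\rho^2$ (so $C+D>0$), and assume $D-C>2$. Let $\tilde\kappa(x)=-\frac1\eta\ln\big(1-\frac{x^2\rho^2\eta}{2}-\theta\eta x\big)$ (the cumulant generating function of the VG process $\theta\tau_t+\rho W_{\tau_t}$ at time 1, $\tau$ a gamma subordinator with $\tau_t\sim\Gamma(t/\eta,1/\eta)$), and $\tilde m=\tilde\kappa(1)$. Let $\hat\nu$ be the measure on $(-1,\infty)\setminus\{0\}$ given by $\hat\nu(dx)=\frac{-1}{\eta\ln(x+1)}(x+1)^{C+D-1}\,dx$ for $x\in(-1,0)$ and $\hat\nu(dx)=\frac{1}{\eta\ln(x+1)}(x+1)^{C-D-1}\,dx$ for $x\in(0,\infty)$. For constants $A>0$, $\tilde s>0$, $\tilde A=A\tilde s$, define for $u\ge0$ $$\hat\kappa^{VG}_{\tilde A}(u)=-\tilde A\tilde mu+\int_{-1}^\infty\big(e^{-\tilde Aux}-1+\tilde Aux\big)\,\hat\nu(dx).$$ Here $a\wedge b=\min(a,b)$, with the convention $1/(\tilde A\cdot 0)\wedge 1=1$. *)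

(* Defs.v *)
From Stdlib Require Import Reals Lra.
Open Scope R_scope.

Definition VG_C (theta rho : R) : R := theta / rho ^ 2.
Definition VG_D (theta rho eta : R) : R :=
  sqrt (theta ^ 2 + 2 * rho ^ 2 / eta) / rho ^ 2.

(* cumulant generating function of the VG process at time 1 *)
Definition kappa_tilde (theta rho eta x : R) : R :=
  - / eta * ln (1 - x ^ 2 * rho ^ 2 * eta / 2 - theta * eta * x).

Definition m_tilde (theta rho eta : R) : R := kappa_tilde theta rho eta 1.

(* density of the measure nu-hat on (-1,oo)\{0} w.r.t. Lebesgue measure;
   the value at x = 0 is irrelevant (a null set). *)
Definition nu_hat_density (theta rho eta x : R) : R :=
  let C := VG_C theta rho in
  let D := VG_D theta rho eta in
  if Rlt_dec x 0
  then - / (eta * ln (x + 1)) * Rpower (x + 1) (C + D - 1)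
  else / (eta * ln (x + 1)) * Rpower (x + 1) (C - D - 1).

Definition kappa_hat_integrand (theta rho eta At u x : R) : R :=
  (exp (- At * u * x) - 1 + At * u * x) * nu_hat_density theta rho eta x.

Definition improper_integral_m1_infty (f : R -> R) (I : R) : Prop :=
  (forall a b, -1 < a -> a < b -> inhabited (Riemann_integrable f a b)) /\
  forall eps, 0 < eps ->
    exists a0 b0, -1 < a0 /\ a0 < b0 /\
      forall a b (pr : Riemann_integrable f a b),
        -1 < a -> a < a0 -> b0 < b -> Rabs (RiemannInt pr - I) < eps.

Definition kappa_hat_VG_is (theta rho eta At u K : R) : Prop :=
  exists I, improper_integral_m1_infty (kappa_hat_integrand theta rho eta At u) I
            /\ K = - At * m_tilde theta rho eta * u + I.

(* (1/(At u)) /\ 1, with the convention 1/(At*0) /\ 1 = 1 *)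
Definition min_inv (At u : R) : R :=
  if Req_EM_T u 0 then 1 else Rmin (/ (At * u)) 1.

Definition kappa_hat_VG_lower (theta rho eta At u : R) : R :=
  let C := VG_C theta rho in
  let D := VG_D theta rho eta in
  let w := min_inv At u in
  - At * m_tilde theta rho eta * u
  + exp 1 / eta *
    ( - exp (At * u) * (At * u) / (C + D + 2) * Rpower w (C + D + 2)
      + exp (At * u) / (C + D + 1) * Rpower w (C + D + 1)
      + At * u / (C + D + 2)
      - (1 + At * u) / (C + D + 1) ).

(* Main.v *)
Require Import Defs.
From Stdlib Require Import Reals Lra Classical FunctionalExtensionality.
From Coquelicot Require Import Coquelicot.
Open Scope R_scope.

Lemma exp_m_ge y : 1 - y <= exp (- y).
Proof. generalize (exp_ineq1_le (-y)); lra. Qed.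

Lemma expm1_le y : 0 <= y -> exp y - 1 <= y * exp y.
Proof. intros Hy. generalize (exp_m_ge y). intros H.
  assert (E: exp y * exp (-y) = 1) by (rewrite <- exp_plus; replace (y + - y) with 0 by ring; apply exp_0).
  generalize (exp_pos y); nra. Qed.

Lemma exp_le x y : x <= y -> exp x <= exp y.
Proof. intros [H|H]. left; apply exp_increasing; auto. subst; lra. Qed.

Lemma ln_le_m1 s : 0 < s -> ln s <= s - 1.
Proof. intros Hs. generalize (exp_ineq1_le (ln s)); rewrite exp_ln; lra. Qed.

Lemma ln_ge_inv s : 0 < s -> 1 - / s <= ln s.
Proof. intros Hs. generalize (ln_le_m1 (/ s) (Rinv_0_lt_compat _ Hs)).
  rewrite ln_Rinv; lra. Qed.

Lemma ln_neg s : 0 < s < 1 -> ln s < 0.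
Proof. intros [H1 H2]. rewrite <- ln_1. apply ln_increasing; lra. Qed.

Lemma ln_pos' s : 1 < s -> 0 < ln s.
Proof. intros H. rewrite <- ln_1. apply ln_increasing; lra. Qed.

Lemma Rpower_pos' t p : 0 < Rpower t p.
Proof. unfold Rpower; apply exp_pos. Qed.

Lemma Rpower_le1 t p : 0 < t <= 1 -> 0 <= p -> Rpower t p <= 1.
Proof. intros [H1 H2] Hp. unfold Rpower. rewrite <- exp_0.
  assert (ln t <= 0). { destruct (Req_dec t 1). subst; rewrite ln_1; lra. generalize (ln_neg t); lra. }
  apply exp_le. nra. Qed.

Lemma Rpower_le1' t p : 1 <= t -> p <= 0 -> Rpower t p <= 1.
Proof. intros H1 Hp. unfold Rpower. rewrite <- exp_0.
  assert (0 <= ln t). { destruct (Req_dec t 1). subst; rewrite ln_1; lra. generalize (ln_pos' t); lra. }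
  apply exp_le. nra. Qed.

Lemma Rpower_S t p : 0 < t -> Rpower t (p + 1) = Rpower t p * t.
Proof. intros H. rewrite Rpower_plus, Rpower_1; auto. Qed.

Definition dens k q eta x := if Rlt_dec x 0 then - / (eta * ln (x + 1)) * Rpower (x + 1) (k - 1)
  else / (eta * ln (x + 1)) * Rpower (x + 1) (q - 1).
Definition g c x := exp (- (c * x)) - 1 + c * x.
Definition F c k q eta x := g c x * dens k q eta x.

Lemma g_nonneg c x : 0 <= g c x.
Proof. unfold g. generalize (exp_m_ge (c*x)); lra. Qed.

Lemma g0 c : g c 0 = 0.
Proof. unfold g. rewrite Rmult_0_r, Ropp_0, exp_0; ring. Qed.

Lemma F0 c k q eta : F c k q eta 0 = 0.
Proof. unfold F. rewrite g0; ring. Qed.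

Lemma dens_neg k q eta x : -1 < x < 0 ->
  dens k q eta x = / (eta * (- ln (x+1))) * Rpower (x+1) (k-1).
Proof. intros Hx. unfold dens. destruct (Rlt_dec x 0); [|lra].
  assert (ln (x+1) < 0) by (apply ln_neg; lra).
  f_equal. rewrite <- Ropp_mult_distr_r. rewrite Rinv_opp. ring. Qed.

Lemma dens_pos k q eta x : 0 < x ->
  dens k q eta x = / (eta * ln (x+1)) * Rpower (x+1) (q-1).
Proof. intros Hx. unfold dens. destruct (Rlt_dec x 0); [lra|]. auto. Qed.

Section S.
Variables (c k q eta : R).
Hypotheses (Hc : 0 <= c) (Hk : 0 < k) (Hq : q < -2) (He : 0 < eta).

Lemma F_nonneg x : -1 < x -> 0 <= F c k q eta x.
Proof. intros Hx. destruct (Rtotal_order x 0) as [H|[H|H]].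
  - unfold F. rewrite dens_neg by lra. apply Rmult_le_pos. apply g_nonneg.
    assert (ln (x+1) < 0) by (apply ln_neg; lra).
    apply Rmult_le_pos. left; apply Rinv_0_lt_compat. nra. left; apply Rpower_pos'.
  - subst. rewrite F0; lra.
  - unfold F. rewrite dens_pos by lra. apply Rmult_le_pos. apply g_nonneg.
    assert (0 < ln (x+1)) by (apply ln_pos'; lra).
    apply Rmult_le_pos. left; apply Rinv_0_lt_compat. nra. left; apply Rpower_pos'.
Qed.

Lemma F_up_neg x : -1 < x <= 0 -> F c k q eta x <= c * exp c / eta * Rpower (x+1) (k-1).
Proof. intros Hx. try destruct Hx as [Hx1 Hx2]. destruct (Req_dec x 0).
  subst. rewrite F0. assert (0 < Rpower (0+1) (k-1)) by apply Rpower_pos'.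
  assert (0 < exp c) by apply exp_pos. unfold Rdiv.
  assert (0 < /eta) by (apply Rinv_0_lt_compat; lra).
  assert (0 <= c * exp c) by nra. apply Rmult_le_pos; [apply Rmult_le_pos|]; lra.
  unfold F. rewrite dens_neg by lra.
  set (s := - ln (x+1)). assert (Hs : -x <= s) by (unfold s; generalize (ln_le_m1 (x+1)); lra).
  assert (Hg : g c x <= c * exp c * s).
  { unfold g. set (y := - (c*x)).
    assert (0 <= y) by (unfold y; nra).
    assert (y <= c) by (assert (0 <= c*(x+1)) by (apply Rmult_le_pos; lra); unfold y; lra).
    generalize (expm1_le y H0). intros.
    assert (exp y <= exp c) by (apply exp_le; auto).
    assert (y * exp y <= y * exp c) by nra.
    assert (y <= c * s) by (unfold y; nra).
    assert (0 < exp c) by apply exp_pos.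
    replace (c*x) with (-y) by (unfold y; ring). nra. }
  assert (Hsp : 0 < s) by lra.
  assert (g c x * / (eta * s) <= c * exp c / eta).
  { apply Rmult_le_reg_r with (eta * s). nra.
    rewrite Rmult_assoc, Rinv_l by nra. unfold Rdiv.
    replace (c * exp c * / eta * (eta * s)) with (c * exp c * s) by (field; lra). lra. }
  rewrite <- Rmult_assoc. apply Rmult_le_compat_r. left; apply Rpower_pos'. auto.
Qed.

Lemma F_up_pos x : 0 <= x -> F c k q eta x <= c / eta * Rpower (x+1) q.
Proof. intros Hx. try destruct Hx as [Hx1 Hx2]. destruct (Req_dec x 0).
  subst. rewrite F0. assert (0 < Rpower (0+1) q) by apply Rpower_pos'.
  unfold Rdiv. assert (0 < /eta) by (apply Rinv_0_lt_compat; lra). apply Rmult_le_pos; [apply Rmult_le_pos|]; lra.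
  unfold F. rewrite dens_pos by lra.
  set (s := ln (x+1)). assert (Hs : 1 - / (x+1) <= s) by (unfold s; apply ln_ge_inv; lra).
  assert (Hs' : x <= s * (x+1)).
  { replace x with ((1 - /(x+1)) * (x+1)) at 1 by (field; lra). apply Rmult_le_compat_r; lra. }
  assert (Hg : g c x <= c * x).
  { unfold g. assert (exp (-(c*x)) <= 1). rewrite <- exp_0. apply exp_le. nra. lra. }
  assert (Hsp : 0 < s) by (unfold s; apply ln_pos'; lra).
  assert (g c x * / (eta * s) <= c / eta * (x+1)).
  { apply Rmult_le_reg_r with (eta * s). nra.
    rewrite Rmult_assoc, Rinv_l by nra. unfold Rdiv.
    replace (c * / eta * (x+1) * (eta * s)) with (c * (s * (x+1))) by (field; lra). nra. }
  rewrite <- Rmult_assoc.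
  replace (Rpower (x+1) q) with ((x+1) * Rpower (x+1) (q-1)).
  2:{ replace q with ((q-1)+1) at 2 by ring. rewrite Rpower_S by lra. ring. }
  rewrite <- Rmult_assoc. apply Rmult_le_compat_r. left; apply Rpower_pos'. auto.
Qed.
End S.

Section S2.
Variables (c k q eta : R).
Hypotheses (Hc : 0 <= c) (Hk : 0 < k) (Hq : q < -2) (He : 0 < eta).

Lemma F_low x : -1 < x <= 0 -> exp 1 / eta * g c x * Rpower (x+1) k <= F c k q eta x.
Proof. intros [Hx1 Hx2]. destruct (Req_dec x 0).
  subst. rewrite F0, g0. lra.
  unfold F. rewrite dens_neg by lra.
  set (t := x+1). set (s := - ln t).
  assert (Ht : t = exp (- s)) by (unfold s; rewrite Ropp_involutive, exp_ln; unfold t; lra).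
  assert (Hsp : 0 < s) by (unfold s; generalize (ln_neg t); unfold t; lra).
  assert (Hes : exp 1 * t * s <= 1).
  { rewrite Ht. rewrite <- exp_plus. generalize (exp_ineq1_le (s-1)). intros H1.
    assert (E: exp (1 + - s) * exp (s - 1) = 1) by (rewrite <- exp_plus; replace (1 + - s + (s-1)) with 0 by ring; apply exp_0).
    generalize (exp_pos (1 + - s)). nra. }
  replace k with ((k-1)+1) at 1 by ring. rewrite Rpower_S by (unfold t; lra).
  assert (0 <= g c x) by apply g_nonneg. assert (0 < Rpower t (k-1)) by apply Rpower_pos'.
  assert (exp 1 / eta * t <= / (eta * s)).
  { apply Rmult_le_reg_r with (eta * s). nra. rewrite Rinv_l by nra.
    replace (exp 1 / eta * t * (eta * s)) with (exp 1 * t * s) by (field; lra). lra. }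
  replace (exp 1 / eta * g c x * (Rpower t (k - 1) * t)) with (g c x * (exp 1 / eta * t) * Rpower t (k-1)) by ring.
  replace (g c x * (/ (eta*s) * Rpower t (k-1))) with (g c x * / (eta*s) * Rpower t (k-1)) by ring.
  apply Rmult_le_compat_r. lra. apply Rmult_le_compat_l; lra.
Qed.

Lemma F_small x : -1/2 <= x -> F c k q eta x <= (2 * c^2 * exp c + c^2) / eta * Rabs x.
Proof. intros Hx.
  assert (0 <= (2 * c^2 * exp c) / eta). { unfold Rdiv. apply Rmult_le_pos. generalize (exp_pos c); nra. left; apply Rinv_0_lt_compat; lra. }
  assert (0 <= c^2 / eta). { unfold Rdiv. apply Rmult_le_pos. nra. left; apply Rinv_0_lt_compat; lra. }
  assert (Hsplit : (2 * c^2 * exp c + c^2) / eta * Rabs x = (2 * c^2 * exp c) / eta * Rabs x + c^2/eta * Rabs x) by (field; lra).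
  rewrite Hsplit. generalize (Rabs_pos x); intros Hax.
  destruct (Rtotal_order x 0) as [Hx0|[Hx0|Hx0]].
  - unfold F. rewrite dens_neg by lra. rewrite Rabs_left by lra.
    set (t := x+1). set (s := - ln t).
    assert (Hs : -x <= s) by (unfold s; generalize (ln_le_m1 t); unfold t; lra).
    assert (Hg : g c x <= c^2 * exp c * (-x) * s).
    { unfold g. set (y := - (c*x)).
      assert (0 <= y) by (unfold y; nra).
      assert (y <= c) by (assert (0 <= c*(x+1)) by (apply Rmult_le_pos; lra); unfold y; lra).
      generalize (expm1_le y H1). intros.
      assert (exp y <= exp c) by (apply exp_le; auto).
      assert (0 < exp y) by apply exp_pos.
      assert (y * (exp y - 1) <= y * (y * exp y)) by nra.
      assert (y * y * exp y <= y * y * exp c) by nra.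
      assert (y * y <= c^2 * (-x) * s) by (unfold y; nra).
      assert (0 < exp c) by apply exp_pos.
      replace (c*x) with (-y) by (unfold y; ring). nra. }
    assert (Hsp : 0 < s) by lra.
    assert (g c x * / (eta * s) <= c^2 * exp c / eta * (-x)).
    { apply Rmult_le_reg_r with (eta * s). nra.
      rewrite Rmult_assoc, Rinv_l by nra. unfold Rdiv.
      replace (c^2 * exp c * / eta * (-x) * (eta * s)) with (c^2 * exp c * (-x) * s) by (field; lra). lra. }
    assert (HP : Rpower t (k-1) <= 2).
    { assert (Rpower t (k-1) * t <= 1). rewrite <- Rpower_S by (unfold t; lra).
        apply Rpower_le1; unfold t; lra.
      assert (0 < Rpower t (k-1)) by apply Rpower_pos'. unfold t in *. nra. }
    assert (0 <= g c x * / (eta * s)) by (apply Rmult_le_pos; [apply g_nonneg| left; apply Rinv_0_lt_compat; nra]).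
    assert (0 < Rpower t (k-1)) by apply Rpower_pos'.
    assert (0 <= c ^ 2 * exp c / eta * - x) by (generalize (exp_pos c); intros; unfold Rdiv; apply Rmult_le_pos; [apply Rmult_le_pos; [nra| left; apply Rinv_0_lt_compat; lra] | lra]).
    assert (g c x * / (eta * s) * Rpower t (k - 1) <= c ^ 2 * exp c / eta * - x * 2) by nra.
    assert (c ^ 2 * exp c / eta * - x * 2 = 2 * c ^ 2 * exp c / eta * - x) by (field; lra).
    nra.
  - subst. rewrite F0. nra.
  - unfold F. rewrite dens_pos by lra. rewrite Rabs_right by lra.
    set (s := ln (x+1)). assert (Hs : 1 - / (x+1) <= s) by (unfold s; apply ln_ge_inv; lra).
    assert (Hs' : x <= s * (x+1)).
    { replace x with ((1 - /(x+1)) * (x+1)) at 1 by (field; lra). apply Rmult_le_compat_r; lra. }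
    assert (Hg : g c x <= c^2 * x * (s * (x+1))).
    { unfold g. set (z := c*x). assert (0 <= z) by (unfold z; nra).
      assert (E: exp (-z) * exp z = 1) by (rewrite <- exp_plus; replace (-z + z) with 0 by ring; apply exp_0).
      generalize (exp_ineq1_le z) (exp_m_ge z) (exp_pos (-z)) (exp_pos z). intros.
      assert (exp (-z) * (1 + z) <= 1) by nra.
      assert (z * (1 - exp (-z)) <= z * z) by nra.
      assert (z * z <= c^2 * x * (s * (x+1))) by (unfold z; nra).
      nra. }
    assert (Hsp : 0 < s) by (unfold s; apply ln_pos'; lra).
    assert (g c x * / (eta * s) <= c^2 / eta * x * (x+1)).
    { apply Rmult_le_reg_r with (eta * s). nra.
      rewrite Rmult_assoc, Rinv_l by nra. unfold Rdiv.
      replace (c^2 * / eta * x * (x+1) * (eta * s)) with (c^2 * x * (s * (x+1))) by (field; lra). lra. }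
    assert (HP : (x+1) * Rpower (x+1) (q-1) <= 1).
    { rewrite Rmult_comm, <- Rpower_S by lra. apply Rpower_le1'; lra. }
    assert (0 <= g c x * / (eta * s)) by (apply Rmult_le_pos; [apply g_nonneg| left; apply Rinv_0_lt_compat; nra]).
    assert (0 < Rpower (x+1) (q-1)) by apply Rpower_pos'.
    assert (g c x * / (eta * s) * Rpower (x+1) (q - 1) <= c^2 / eta * x * (x+1) * Rpower (x+1) (q-1)) by nra.
    assert (0 <= c^2/eta * x) by nra.
    assert (c^2 / eta * x * (x+1) * Rpower (x+1) (q-1) <= c^2/eta * x) by nra.
    nra.
Qed.
End S2.

Lemma Rpower_deriv p x : -1 < x -> p + 1 <> 0 ->
  is_derive (fun y => Rpower (y+1) (p+1) / (p+1)) x (Rpower (x+1) p).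
Proof. intros Hx Hp. unfold Rpower. auto_derive. lra.
  replace ((p+1) * ln (x+1)) with (p * ln (x+1) + ln (x+1)) by ring.
  rewrite exp_plus, exp_ln by lra. field. lra. Qed.

Lemma Rpower_cont p x : -1 < x -> continuous (fun y => Rpower (y+1) p) x.
Proof. intros Hx. apply (ex_derive_continuous (K:=R_AbsRing) (V:=R_NormedModule)). unfold Rpower. auto_derive. lra. Qed.

Lemma is_RInt_pow p a b : -1 < a -> -1 < b -> p + 1 <> 0 ->
  is_RInt (fun x => Rpower (x+1) p) a b ((Rpower (b+1) (p+1) - Rpower (a+1) (p+1)) / (p+1)).
Proof. intros Ha Hb Hp.
  replace ((Rpower (b+1) (p+1) - Rpower (a+1) (p+1)) / (p+1)) with
    (minus (Rpower (b+1) (p+1) / (p+1)) (Rpower (a+1) (p+1) / (p+1))).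
  2:{ unfold minus, plus, opp; simpl. field. auto. }
  apply (is_RInt_derive (fun y => Rpower (y+1) (p+1) / (p+1))).
  - intros x Hx. apply Rpower_deriv; auto. destruct Hx. unfold Rmin in *. destruct (Rle_dec a b); lra.
  - intros x Hx. apply Rpower_cont. destruct Hx. unfold Rmin in *. destruct (Rle_dec a b); lra.
Qed.

Section S.
Variables (c k q eta : R).
Hypotheses (Hc : 0 <= c) (Hk : 0 < k) (Hq : q < -2) (He : 0 < eta).

Lemma F_cont x : -1 < x -> continuous (F c k q eta) x.
Proof. intros Hx. destruct (Rtotal_order x 0) as [Hx0|[Hx0|Hx0]].
  - apply continuous_ext_loc with (fun y => (exp (-(c*y)) - 1 + c*y) * (- / (eta * ln (y+1)) * Rpower (y+1) (k-1))).
    + apply (locally_interval _ x (-1) 0); simpl; try lra.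
      intros y Hy1 Hy2. unfold F, dens, g. destruct (Rlt_dec y 0); [reflexivity | lra].
    + apply (ex_derive_continuous (K:=R_AbsRing) (V:=R_NormedModule)). unfold Rpower. auto_derive. repeat split; try lra.
      assert (ln (x+1) < 0) by (apply ln_neg; lra). nra.
  - subst x. apply continuity_pt_filterlim.
    intros eps Heps.
    set (L := (2 * c^2 * exp c + c^2) / eta).
    assert (HL : 0 <= L). { unfold L, Rdiv. apply Rmult_le_pos. generalize (exp_pos c); nra. left; apply Rinv_0_lt_compat; lra. }
    exists (Rmin (1/2) (eps / (L + 1))). split.
    { apply Rmin_pos. lra. apply Rdiv_lt_0_compat; lra. }
    intros y [_ Hy]. simpl in Hy. unfold R_dist in *. rewrite F0.
    rewrite Rminus_0_r in *. try rewrite Rminus_0_r.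
    assert (Hy1 : Rabs y < 1/2) by (generalize (Rmin_l (1/2) (eps/(L+1))); lra).
    assert (Hy2 : Rabs y < eps/(L+1)) by (generalize (Rmin_r (1/2) (eps/(L+1))); lra).
    assert (-1/2 <= y) by (generalize (Rabs_def2 _ _ Hy1); lra).
    generalize (F_small c k q eta Hc Hk Hq He y H). fold L. intros Hb.
    assert (Hn : 0 <= F c k q eta y) by (apply F_nonneg; auto; lra).
    change (Rabs (F c k q eta y - 0) < eps). rewrite Rminus_0_r. rewrite Rabs_right by lra.
    assert (L * Rabs y <= L * (eps / (L+1))) by (apply Rmult_le_compat_l; lra).
    assert (L * (eps / (L+1)) < eps).
    { apply Rmult_lt_reg_r with (L+1). lra. replace (L*(eps/(L+1))*(L+1)) with (L*eps) by (field; lra). nra. }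
    lra.
  - apply continuous_ext_loc with (fun y => (exp (-(c*y)) - 1 + c*y) * (/ (eta * ln (y+1)) * Rpower (y+1) (q-1))).
    + apply (locally_interval _ x 0 p_infty); simpl; try lra. auto.
      intros y Hy1 Hy2. unfold F, dens, g. destruct (Rlt_dec y 0); [lra | reflexivity].
    + apply (ex_derive_continuous (K:=R_AbsRing) (V:=R_NormedModule)). unfold Rpower. auto_derive. repeat split; try lra.
      assert (0 < ln (x+1)) by (apply ln_pos'; lra). nra.
Qed.

Lemma F_exRInt a b : -1 < a -> -1 < b -> ex_RInt (F c k q eta) a b.
Proof. intros Ha Hb. apply (ex_RInt_continuous (V:=R_CompleteNormedModule)). intros z [Hz _]. apply F_cont.
  unfold Rmin in Hz. destruct (Rle_dec a b); lra. Qed.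

Lemma F_RInt_nonneg a b : -1 < a -> a <= b -> 0 <= RInt (F c k q eta) a b.
Proof. intros Ha Hab. apply RInt_ge_0; auto. apply F_exRInt; lra.
  intros x Hx. apply F_nonneg; auto; lra. Qed.

Lemma F_RInt_mono a a1 b1 b : -1 < a -> a <= a1 -> a1 <= b1 -> b1 <= b ->
  RInt (F c k q eta) a1 b1 <= RInt (F c k q eta) a b.
Proof. intros. 
  rewrite <- (RInt_Chasles (F c k q eta) a a1 b) by (apply F_exRInt; lra).
  rewrite <- (RInt_Chasles (F c k q eta) a1 b1 b) by (apply F_exRInt; lra).
  unfold plus; simpl.
  generalize (F_RInt_nonneg a a1 ltac:(lra) ltac:(lra)) (F_RInt_nonneg b1 b ltac:(lra) ltac:(lra)). lra.
Qed.
End S.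

Lemma Rpower_base1 p : Rpower 1 p = 1.
Proof. unfold Rpower. rewrite ln_1, Rmult_0_r. apply exp_0. Qed.

Lemma is_RInt_pow2 al be p a b : -1 < a -> -1 < b -> p + 1 <> 0 -> p + 1 + 1 <> 0 ->
  is_RInt (fun x => al * Rpower (x+1) p + be * Rpower (x+1) (p+1)) a b
   (al * ((Rpower (b+1) (p+1) - Rpower (a+1) (p+1)) / (p+1))
    + be * ((Rpower (b+1) (p+1+1) - Rpower (a+1) (p+1+1)) / (p+1+1))).
Proof. intros.
  apply (is_RInt_plus (V:=R_NormedModule) (fun x => al * Rpower (x+1) p) (fun x => be * Rpower (x+1) (p+1))).
  apply (is_RInt_scal (V:=R_NormedModule) (fun x => Rpower (x+1) p)). apply is_RInt_pow; auto.
  apply (is_RInt_scal (V:=R_NormedModule) (fun x => Rpower (x+1) (p+1))). apply is_RInt_pow; auto.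
Qed.

Lemma is_RInt_pow1 al p a b : -1 < a -> -1 < b -> p + 1 <> 0 ->
  is_RInt (fun x => al * Rpower (x+1) p) a b
   (al * ((Rpower (b+1) (p+1) - Rpower (a+1) (p+1)) / (p+1))).
Proof. intros.
  apply (is_RInt_scal (V:=R_NormedModule) (fun x => Rpower (x+1) p)). apply is_RInt_pow; auto.
Qed.

Section S.
Variables (c k q eta : R).
Hypotheses (Hc : 0 <= c) (Hk : 0 < k) (Hq : q < -2) (He : 0 < eta).
Let f := F c k q eta.

Definition Mb := c * exp c / eta / k + c / eta / (- (q+1)).

Lemma F_bound a b : -1 < a < b -> RInt f a b <= Mb.
Proof. intros [Ha Hab].
  set (a' := Rmin a (-1/2)). set (b' := Rmax b 1).
  assert (Ha' : -1 < a' <= a) by (unfold a', Rmin; destruct (Rle_dec a (-1/2)); lra).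
  assert (Hb' : b <= b' /\ 1 <= b') by (unfold b', Rmax; destruct (Rle_dec b 1); lra).
  assert (a' <= -1/2) by apply Rmin_r.
  apply Rle_trans with (RInt f a' b').
  apply F_RInt_mono; auto; lra.
  rewrite <- (RInt_Chasles f a' 0 b') by (apply F_exRInt; auto; lra).
  unfold plus; simpl.
  assert (H1 : RInt f a' 0 <= c * exp c / eta * ((Rpower (0+1) (k-1+1) - Rpower (a'+1) (k-1+1)) / (k-1+1))).
  { rewrite <- (is_RInt_unique _ _ _ _ (is_RInt_pow1 (c * exp c / eta) (k-1) a' 0 ltac:(lra) ltac:(lra) ltac:(lra))).
    apply RInt_le. lra. apply F_exRInt; auto; lra.
    eexists; apply is_RInt_pow1; lra.
    intros x Hx. apply F_up_neg; auto; lra. }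
  assert (H2 : RInt f 0 b' <= c / eta * ((Rpower (b'+1) (q+1) - Rpower (0+1) (q+1)) / (q+1))).
  { rewrite <- (is_RInt_unique _ _ _ _ (is_RInt_pow1 (c / eta) q 0 b' ltac:(lra) ltac:(lra) ltac:(lra))).
    apply RInt_le. lra. apply F_exRInt; auto; lra.
    eexists; apply is_RInt_pow1; lra.
    intros x Hx. apply F_up_pos; auto; lra. }
  replace (0+1) with 1 in H1, H2 by ring. rewrite Rpower_base1 in H1, H2.
  replace (k-1+1) with k in H1 by ring.
  assert (0 <= c * exp c / eta) by (unfold Rdiv; apply Rmult_le_pos; [generalize (exp_pos c); nra| left; apply Rinv_0_lt_compat; lra]).
  assert (0 <= c / eta) by (unfold Rdiv; apply Rmult_le_pos; [lra| left; apply Rinv_0_lt_compat; lra]).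
  assert (P1 := Rpower_pos' (a'+1) k). assert (P2 := Rpower_pos' (b'+1) (q+1)).
  assert (E1 : c * exp c / eta * ((1 - Rpower (a' + 1) k) / k) <= c * exp c / eta / k).
  { replace (c * exp c / eta / k) with (c * exp c / eta * / k) by (field; lra).
    apply Rmult_le_compat_l; auto. unfold Rdiv. assert (0 < /k) by (apply Rinv_0_lt_compat; lra). nra. }
  assert (E2 : c / eta * ((Rpower (b' + 1) (q + 1) - 1) / (q + 1)) <= c / eta / - (q + 1)).
  { replace (c / eta / - (q+1)) with (c / eta * / - (q+1)) by (field; lra).
    apply Rmult_le_compat_l; auto.
    replace ((Rpower (b' + 1) (q + 1) - 1) / (q + 1)) with ((1 - Rpower (b' + 1) (q + 1)) * / - (q + 1)) by (field; lra).
    assert (0 < / - (q+1)) by (apply Rinv_0_lt_compat; lra). nra. }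
  unfold Mb. lra.
Qed.

Definition E r := exists a b, -1 < a < b /\ r = RInt f a b.

Lemma lower_piece w t0 : 0 < w <= 1 -> 0 < t0 < w ->
  RInt f (t0 - 1) 0 >=
  exp 1 / eta * ( - exp c * c / (k + 2) * Rpower w (k + 2) + exp c / (k + 1) * Rpower w (k + 1)
     + c / (k + 2) - (1 + c) / (k + 1)) - exp 1 / eta * (exp c - 1 - c) * t0.
Proof. intros Hw Ht.
  set (a1 := exp 1 / eta * (exp c - 1 - c)). set (b1 := exp 1 / eta * (c - c * exp c)).
  set (a2 := exp 1 / eta * (-1 - c)). set (b2 := exp 1 / eta * c).
  assert (He1 : 0 < exp 1 / eta) by (unfold Rdiv; apply Rmult_lt_0_compat; [apply exp_pos| apply Rinv_0_lt_compat; lra]).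
  assert (Hexc : 1 + c <= exp c) by apply exp_ineq1_le.
  rewrite <- (RInt_Chasles f (t0-1) (w-1) 0) by (apply F_exRInt; auto; lra).
  unfold plus; simpl.
  assert (L1 : RInt f (t0-1) (w-1) >= a1 * ((Rpower (w-1+1) (k+1) - Rpower (t0-1+1) (k+1)) / (k+1))
         + b1 * ((Rpower (w-1+1) (k+1+1) - Rpower (t0-1+1) (k+1+1)) / (k+1+1))).
  { rewrite <- (is_RInt_unique _ _ _ _ (is_RInt_pow2 a1 b1 k (t0-1) (w-1) ltac:(lra) ltac:(lra) ltac:(lra) ltac:(lra))).
    apply Rle_ge, RInt_le. lra. eexists; apply is_RInt_pow2; lra. apply F_exRInt; auto; lra.
    intros x Hx. eapply Rle_trans; [| apply F_low; auto; lra].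
    set (t := x+1). assert (Htp : 0 < t) by (unfold t; lra).
    rewrite Rpower_S by lra.
    assert (Hg : exp c * (1 - c*t) - 1 - c + c*t <= g c x).
    { unfold g. replace (- (c*x)) with (c + - (c*t)) by (unfold t; ring). rewrite exp_plus.
      generalize (exp_m_ge (c*t)) (exp_pos c). unfold t. intros. nra. }
    assert (P := Rpower_pos' t k).
    unfold a1, b1. 
    replace (exp 1 / eta * (exp c - 1 - c) * Rpower t k + exp 1 / eta * (c - c * exp c) * (Rpower t k * t))
      with (exp 1 / eta * Rpower t k * (exp c * (1 - c*t) - 1 - c + c*t)) by ring.
    replace (exp 1 / eta * g c x * Rpower t k) with (exp 1 / eta * Rpower t k * g c x) by ring.
    apply Rmult_le_compat_l; auto. nra. }
  assert (L2 : RInt f (w-1) 0 >= a2 * ((Rpower (0+1) (k+1) - Rpower (w-1+1) (k+1)) / (k+1))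
         + b2 * ((Rpower (0+1) (k+1+1) - Rpower (w-1+1) (k+1+1)) / (k+1+1))).
  { rewrite <- (is_RInt_unique _ _ _ _ (is_RInt_pow2 a2 b2 k (w-1) 0 ltac:(lra) ltac:(lra) ltac:(lra) ltac:(lra))).
    apply Rle_ge, RInt_le. lra. eexists; apply is_RInt_pow2; lra. apply F_exRInt; auto; lra.
    intros x Hx. eapply Rle_trans; [| apply F_nonneg; auto; lra].
    set (t := x+1). assert (Htp : 0 < t) by (unfold t; lra).
    rewrite Rpower_S by lra. assert (P := Rpower_pos' t k).
    unfold a2, b2.
    replace (exp 1 / eta * (-1 - c) * Rpower t k + exp 1 / eta * c * (Rpower t k * t))
      with (exp 1 / eta * Rpower t k * (-1 - c + c*t)) by ring.
    assert (0 < exp 1 / eta * Rpower t k) by (apply Rmult_lt_0_compat; auto).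
    assert (-1 - c + c*t <= 0) by (unfold t; nra). nra. }
  replace (w-1+1) with w in L1, L2 by ring. replace (t0-1+1) with t0 in L1 by ring.
  replace (0+1) with 1 in L2 by ring. rewrite !Rpower_base1 in L2.
  replace (k+1+1) with (k+2) in L1, L2 by ring.
  assert (T2 := Rpower_pos' t0 (k+2)).
  assert (T1 : Rpower t0 (k+1) <= t0).
  { rewrite Rpower_S by lra. assert (Rpower t0 k <= 1) by (apply Rpower_le1; lra). nra. }
  assert (Hb1 : b1 <= 0) by (unfold b1; assert (c - c * exp c <= 0) by nra; nra).
  assert (Ha1 : 0 <= a1) by (unfold a1; nra).
  assert (X1 : a1 * (Rpower t0 (k+1) / (k+1)) <= a1 * t0).
  { apply Rmult_le_compat_l; auto. apply Rle_trans with (Rpower t0 (k+1)); auto.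
    unfold Rdiv. assert (Rpower t0 (k+1) * / (k+1) * (k+1) = Rpower t0 (k+1)) by (field; lra).
    assert (0 < / (k+1)) by (apply Rinv_0_lt_compat; lra). assert (P := Rpower_pos' t0 (k+1)).
    assert (/ (k+1) <= 1). { rewrite <- Rinv_1. apply Rinv_le_contravar; lra. } nra. }
  assert (X2 : 0 <= - b1 * (Rpower t0 (k+2) / (k+2))).
  { apply Rmult_le_pos. lra. unfold Rdiv. apply Rmult_le_pos. lra. left; apply Rinv_0_lt_compat; lra. }
  assert (Eq : a1 * ((Rpower w (k + 1) - Rpower t0 (k + 1)) / (k + 1)) + b1 * ((Rpower w (k + 2) - Rpower t0 (k + 2)) / (k + 2))
     + (a2 * ((1 - Rpower w (k + 1)) / (k + 1)) + b2 * ((1 - Rpower w (k + 2)) / (k + 2)))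
     = exp 1 / eta * ( - exp c * c / (k + 2) * Rpower w (k + 2) + exp c / (k + 1) * Rpower w (k + 1)
     + c / (k + 2) - (1 + c) / (k + 1)) - a1 * (Rpower t0 (k+1) / (k+1)) - b1 * (Rpower t0 (k+2) / (k+2))).
  { unfold a1, b1, a2, b2. field. lra. }
  fold a1. lra.
Qed.
End S.

Theorem mainTheorem16 (theta rho eta A s u : R)
  (Hrho : 0 < rho) (Heta : 0 < eta) (HA : 0 < A) (Hs : 0 < s)
  (HDC : VG_D theta rho eta - VG_C theta rho > 2) (Hu : 0 <= u) :
  let At := A * s in
  let C := VG_C theta rho in
  let D := VG_D theta rho eta in
  (/ At <= u ->
     kappa_hat_VG_lower theta rho eta At u =
     - At * m_tilde theta rho eta * u
     + exp 1 / eta *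
       ( Rpower (/ (At * u)) (C + D + 1) * exp (At * u)
           * (/ (C + D + 1) - / (C + D + 2))
         + At * u / (C + D + 2)
         - (1 + At * u) / (C + D + 1) )) /\
  exists K, kappa_hat_VG_is theta rho eta At u K /\
            K >= kappa_hat_VG_lower theta rho eta At u.
Proof.
  cbv zeta. unfold kappa_hat_VG_lower. cbv zeta.
  set (At := A * s). set (Cc := VG_C theta rho). set (Dd := VG_D theta rho eta).
  assert (HAt : 0 < At) by (unfold At; apply Rmult_lt_0_compat; lra).
  set (c := At * u). set (k := Cc + Dd). set (q := Cc - Dd).
  assert (Hc : 0 <= c) by (unfold c; apply Rmult_le_pos; lra).
  assert (Hq : q < -2) by (unfold q, Cc, Dd; lra).
  assert (Hk : 0 < k).
  { unfold k, Cc, Dd, VG_C, VG_D.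
    set (S := sqrt (theta ^ 2 + 2 * rho ^ 2 / eta)).
    assert (HS0 : 0 <= S) by apply sqrt_pos.
    assert (HS2 : S * S = theta ^ 2 + 2 * rho ^ 2 / eta) by (apply sqrt_sqrt; unfold Rdiv; assert (0 < /eta) by (apply Rinv_0_lt_compat; lra); nra).
    assert (0 < 2 * rho ^ 2 / eta) by (unfold Rdiv; apply Rmult_lt_0_compat; [nra| apply Rinv_0_lt_compat; lra]).
    assert (theta + S > 0) by nra.
    replace (theta / rho ^ 2 + S / rho ^ 2) with ((theta + S) / rho ^ 2) by (field; lra).
    apply Rdiv_lt_0_compat; nra. }
  split.
  - intros Hu'.
    assert (Hu0 : 0 < u) by (assert (0 < / At) by (apply Rinv_0_lt_compat; lra); lra).
    assert (Hc1 : 1 <= c).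
    { unfold c. apply Rmult_le_reg_r with (/At). apply Rinv_0_lt_compat; lra.
      replace (At * u * / At) with u by (field; lra). lra. }
    unfold min_inv. destruct (Req_EM_T u 0); [lra|].
    fold c. rewrite Rmin_left by (rewrite <- Rinv_1; apply Rinv_le_contravar; lra).
    replace (Rpower (/ c) (k + 2)) with (Rpower (/ c) (k + 1) * / c)
      by (replace (k+2) with ((k+1)+1) by ring; rewrite (Rpower_S (/ c) (k+1)) by (apply Rinv_0_lt_compat; lra); reflexivity).
    field. repeat split; lra.
  - assert (Hint : kappa_hat_integrand theta rho eta At u = F c k q eta).
    { apply functional_extensionality. intros x. unfold kappa_hat_integrand, F, g, dens, nu_hat_density.
      replace (- At * u * x) with (- (c * x)) by (unfold c; ring). reflexivity. }
    set (f := F c k q eta).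
    assert (Hbd : bound (E c k q eta)).
    { exists (Mb c k q eta). intros r [a [b [Hab Hr]]]. subst r. apply F_bound; auto. }
    assert (Hne : exists r, E c k q eta r).
    { exists (RInt f (-1/2) 0). exists (-1/2), 0. split; [lra|reflexivity]. }
    destruct (completeness _ Hbd Hne) as [I [HIub HIl]].
    assert (HIge : forall a b, -1 < a < b -> RInt f a b <= I).
    { intros a b Hab. apply HIub. exists a, b. split; auto. }
    exists (- At * m_tilde theta rho eta * u + I). split.
    + exists I. split; [|reflexivity].
      rewrite Hint. split.
      * intros a b Ha Hab. constructor. apply ex_RInt_Reals_0. apply F_exRInt; auto; lra.
      * intros eps Heps.
        destruct (classic (exists r, E c k q eta r /\ I - eps < r)) as [[r [[a1 [b1 [Hab1 Hr]]] Hr2]]|Hn].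
        -- exists a1, b1. split; [lra|]. split; [lra|].
           intros a b pr Ha Ha0 Hb0. rewrite <- RInt_Reals.
           assert (RInt f a1 b1 <= RInt f a b) by (apply F_RInt_mono; auto; lra).
           assert (RInt f a b <= I) by (apply HIge; lra).
           unfold f in *. apply Rabs_def1; subst r; lra.
        -- exfalso. assert (I <= I - eps); [|lra].
           apply HIl. intros r Hr. destruct (Rle_dec r (I - eps)); auto.
           exfalso; apply Hn; exists r; split; auto; lra.
    + set (w := min_inv At u).
      assert (Hw : 0 < w <= 1).
      { unfold w, min_inv. destruct (Req_EM_T u 0). lra.
        split. apply Rmin_pos. apply Rinv_0_lt_compat. fold c; unfold c; nra. lra. apply Rmin_r. }
      fold c. fold k. apply Rplus_ge_compat_l.
      set (T := exp 1 / eta * (- exp c * c / (k + 2) * Rpower w (k + 2) + exp c / (k + 1) * Rpower w (k + 1) +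
         c / (k + 2) - (1 + c) / (k + 1))).
      destruct (Rle_dec T I) as [HTI|HTI]; [lra|]. exfalso.
      set (a1 := exp 1 / eta * (exp c - 1 - c)).
      assert (Ha1 : 0 <= a1).
      { unfold a1. apply Rmult_le_pos. unfold Rdiv; apply Rmult_le_pos; [left; apply exp_pos| left; apply Rinv_0_lt_compat; lra].
        generalize (exp_ineq1_le c); lra. }
      set (t0 := Rmin (w/2) ((T - I) / (2 * (a1 + 1)))).
      assert (Ht0 : 0 < t0 < w).
      { split. apply Rmin_pos. lra. apply Rdiv_lt_0_compat; lra.
        generalize (Rmin_l (w/2) ((T - I) / (2 * (a1 + 1)))). fold t0. lra. }
      assert (Ht0' : a1 * t0 <= (T - I) / 2).
      { assert (t0 <= (T - I) / (2 * (a1 + 1))) by apply Rmin_r.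
        assert (a1 * t0 <= a1 * ((T - I) / (2 * (a1 + 1)))) by (apply Rmult_le_compat_l; lra).
        assert (a1 * ((T - I) / (2 * (a1 + 1))) <= (T - I) / 2).
        { apply Rmult_le_reg_r with (2 * (a1+1)). lra.
          replace (a1 * ((T - I) / (2 * (a1 + 1))) * (2 * (a1 + 1))) with (a1 * (T - I)) by (field; lra).
          replace ((T - I) / 2 * (2 * (a1 + 1))) with ((a1 + 1) * (T - I)) by (field; lra). nra. }
        lra. }
      generalize (lower_piece c k q eta Hc Hk Hq Heta w t0 Hw Ht0). fold f. fold T. fold a1.
      intros Hl.
      assert (RInt f (t0 - 1) 0 <= I) by (apply HIge; lra).
      lra.
Qed.
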